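(* Let $\Lambda=(\lambda_i)_{i=0}^\infty$ be a strictly increasing sequence of non-negative reals with $\lambda_0=0$ and $\sum_{i=1}^\infty 1/\lambda_i<\infty$, and let $M(\Lambda)=\overline{\operatorname{span}}\{t^{\lambda_i}: i\geq 0\}\subseteq C[0,1]$ with the sup-norm. Then $M(\Lambda)$ is not almost square.
   Context: $C[0,1]$ is the space of real-valued continuous functions on $[0,1]$ with the sup-norm. A Banach space $X$ with closed unit ball $B_X$ and unit sphere $S_X$ is almost square if for every finite collection $x_1,\dots,x_k\in S_X$ there exists a sequence $(y_n)$ in $B_X$ such that $\|y_n\|\to 1$ and $\|x_i\pm y_n\|\to 1$ for every $i\in\{1,\dots,k\}$. *)

(* Defs.v *)
From HB Require Import structures.
From mathcomp Require Import all_boot all_order all_algebra.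
From mathcomp Require Import all_classical all_reals all_analysis.
Set Implicit Arguments. Unset Strict Implicit. Unset Printing Implicit Defensive.
Import Order.TTheory GRing.Theory Num.Theory.
Import numFieldNormedType.Exports.
Local Open Scope classical_set_scope.
Local Open Scope ring_scope.

(* Elements of C[0,1] are represented by functions R -> R continuous on [0,1];
   only their values on [0,1] matter for the norm. *)
Definition C01 {R : realType} : set (R -> R) :=
  [set f : R -> R | {within `[0%R, 1%R], continuous f}].

Definition supnorm {R : realType} (f : R -> R) : R :=
  sup [set `|f t| | t in (`[0%R, 1%R] : set R)].

(* the monomial t |-> t^lam  (powR: 0 `^ 0 = 1, 0 `^ lam = 0 for lam > 0) *)
Definition mono {R : realType} (l : R) : R -> R := fun t => t `^ l.

Definition muntz_span {R : realType} (lam : nat -> R) : set (R -> R) :=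
  [set f | exists (n : nat) (c : 'I_n -> R) (k : 'I_n -> nat),
      f = fun t => \sum_(i < n) c i * mono (lam (k i)) t].

Definition MLambda {R : realType} (lam : nat -> R) : set (R -> R) :=
  [set f | C01 f /\ forall e : R, 0 < e ->
      exists2 g, muntz_span lam g & supnorm (f \- g) < e].

Definition almost_square {R : realType} (X : set (R -> R)) : Prop :=
  forall (k : nat) (x : 'I_k -> R -> R),
    (forall i, X (x i) /\ supnorm (x i) = 1) ->
    exists y : nat -> R -> R,
      (forall n, X (y n) /\ supnorm (y n) <= 1) /\
      (fun n => supnorm (y n)) @ \oo --> (1 : R) /\
      (forall i, (fun n => supnorm (x i \+ y n)) @ \oo --> (1 : R) /\
                 (fun n => supnorm (x i \- y n)) @ \oo --> (1 : R)).

(* Main.v *)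
Require Import Defs.
From HB Require Import structures.
From mathcomp Require Import all_boot all_order all_algebra.
From mathcomp Require Import all_classical all_reals all_analysis.
From mathcomp Require Import lra.
Import Order.TTheory GRing.Theory Num.Theory.
Import numFieldNormedType.Exports.
Local Open Scope classical_set_scope.
Local Open Scope ring_scope.

Lemma supnorm_ge {R : realType} (f : R -> R) (M t : R) :
  (forall s, s \in `[0, 1] -> `|f s| <= M) -> t \in `[0, 1] -> `|f t| <= supnorm f.
Proof.
move=> HM ht; rewrite /supnorm; apply: ub_le_sup; last by exists t => //; rewrite inE in ht.
exists M => _ [s hs <-]; apply: HM; by rewrite inE.
Qed.

Lemma supnorm_le {R : realType} (f : R -> R) (B : R) :
  (forall t, t \in `[0, 1] -> `|f t| <= B) -> supnorm f <= B.
Proof.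
move=> HB; rewrite /supnorm; apply: ge_sup.
  by exists `|f 0|, 0 => //=; rewrite in_itv /= lexx ler01.
move=> _ [s hs <-]; apply: HB; by rewrite inE.
Qed.

Lemma supnorm_cst {R : realType} (c : R) : supnorm (fun _ : R => c) = `|c|.
Proof.
apply/eqP; rewrite eq_le; apply/andP; split.
  by apply: supnorm_le.
apply: (@supnorm_ge _ (fun _ => c) `|c| 0) => //.
by rewrite in_itv /= lexx ler01.
Qed.

Lemma cont_bound {R : realType} (f : R -> R) :
  {within `[0%R, 1%R], continuous f} ->
  exists M, forall s, s \in `[0, 1] -> `|f s| <= M.
Proof.
move=> Hc.
have [a ha Ha] := EVT_max (@ler01 R) Hc.
have [b hb Hb] := EVT_min (@ler01 R) Hc.
exists (`|f a| + `|f b|) => s hs.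
have h1 := Ha s hs; have h2 := Hb s hs.
have h3 : f a <= `|f a| := ler_norm _.
have h4 : - f b <= `|f b| by rewrite -normrN ler_norm.
have h5 := normr_ge0 (f a); have h6 := normr_ge0 (f b).
rewrite ler_norml; apply/andP; split; lra.
Qed.

Theorem mainTheorem5 (R : realType) (lam : nat -> R) :
  lam 0%N = 0 ->
  (forall i : nat, lam i < lam i.+1) ->
  (\sum_(1 <= i <oo) ((lam i)^-1)%:E < +oo)%E ->
  ~ almost_square (MLambda lam).
Proof.
move=> l0 _ _ AS.
have X1 : MLambda lam (fun _ => 1).
  split.
    rewrite /C01 /=; apply: continuous_subspaceT => t; exact: cst_continuous.
  move=> e e0; exists (fun _ => 1).
    exists 1%N, (fun _ => 1), (fun _ => 0%N).
    by apply: funext => t; rewrite big_ord1 mul1r /mono l0 powRr0.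
  apply: le_lt_trans e0; apply: supnorm_le => t _.
  by rewrite /= subrr normr0.
have [y [Hy [Hy1 Hxy]]] := AS 1%N (fun _ _ => 1)
   (fun _ => conj X1 (etrans (@supnorm_cst R 1) (@normr1 R))).
have [Hp Hm] := Hxy ord0.
have key : forall n, supnorm (y n) <=
    `|supnorm ((fun _ => 1) \+ y n) - 1| + `|supnorm ((fun _ => 1) \- y n) - 1|.
  move=> n; have [M HM] := @cont_bound _ (y n) (Hy n).1.1.
  apply: supnorm_le => t ht.
  have hb := @supnorm_ge _ ((fun _ => 1) \+ y n) (1 + M) t.
  have hc := @supnorm_ge _ ((fun _ => 1) \- y n) (1 + M) t.
  have hb' : `|1 + y n t| <= supnorm ((fun _ => 1) \+ y n).
    apply: hb ht => s hs /=; apply: le_trans (ler_normD _ _) _.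
    by rewrite normr1 lerD2l HM.
  have hc' : `|1 - y n t| <= supnorm ((fun _ => 1) \- y n).
    apply: hc ht => s hs /=; apply: le_trans (ler_normB _ _) _.
    by rewrite normr1 lerD2l HM.
  set b := supnorm _ in hb' *; set c := supnorm _ in hc' *.
  have e1 : 1 + y n t <= `|1 + y n t| := ler_norm _.
  have e2 : - (1 - y n t) <= `|1 - y n t| by rewrite -normrN ler_norm.
  have e3 : 1 - y n t <= `|1 - y n t| := ler_norm _.
  have e4 : b - 1 <= `|b - 1| := ler_norm _.
  have e5 : c - 1 <= `|c - 1| := ler_norm _.
  have e6 : 0 <= `|b - 1| := normr_ge0 _.
  have e7 : 0 <= `|c - 1| := normr_ge0 _.
  rewrite ler_norml; apply/andP; split; lra.
have q : (0 : R) < 1 / 4 by lra.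
move/cvgrPdist_lt: Hy1 => /(_ _ q) h1.
move/cvgrPdist_lt: Hp => /(_ _ q) h2.
move/cvgrPdist_lt: Hm => /(_ _ q) h3.
have [N _ HN] := (proj2 (near_andP _ _ _) (conj (proj2 (near_andP _ _ _) (conj h1 h2)) h3)).
have [[a1 a2] a3] := HN N (leqnn N).
pose a := supnorm (y N).
pose b := supnorm ((fun=> 1) \+ y N).
pose c := supnorm ((fun=> 1) \- y N).
have k : a <= `|b - 1| + `|c - 1| := key N.
have a1' : `|1 - a| < 1 / 4 := a1.
have a2' : `|1 - b| < 1 / 4 := a2.
have a3' : `|1 - c| < 1 / 4 := a3.
clearbody a b c.
rewrite (distrC b) (distrC c) in k.
have f3 : 1 - a <= `|1 - a| := ler_norm _.
lra.
Qed.
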